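(* Let $\lambda_1=\lambda_2>\lambda_3>0$ and $D=\mathrm{diag}(\lambda_1,\lambda_1,\lambda_3)$. Then: (i) $\mathrm{diag}(-1,-1,1)$ is the unique global maximum of $\widetilde W_{1,0}(\cdot;D)$ on $SO(3)$. (ii) If $\lambda_1>1$, the global minima of $\widetilde W_{1,0}(\cdot;D)$ on $SO(3)$ are exactly the two rotations $$\begin{pmatrix}\frac1{\lambda_1} & \mp\sqrt{1-\frac1{\lambda_1^2}} & 0\\ \pm\sqrt{1-\frac1{\lambda_1^2}} & \frac1{\lambda_1} & 0\\ 0&0&1\end{pmatrix}.$$ (iii) If $\lambda_1\le1$, then $\mathbb I_3$ is the unique global minimum of $\widetilde W_{1,0}(\cdot;D)$ on $SO(3)$.
   Context: $\mathrm{sym}(Y)=\tfrac12(Y+Y^T)$, $\|Y\|^2=\mathrm{tr}(Y^TY)$. $\widetilde W_{1,0}(R;D)=\|\mathrm{sym}(R^TD-\mathbb I_3)\|^2$ for $R\in SO(3)$. *)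

(* Defs.v *)
(* the statement is purely algebraic (matrices over a real
   closed field), stated for an arbitrary R : rcfType (which includes the
   real numbers); Num.sqrt provides the square root. *)
From HB Require Import structures.
From mathcomp Require Import all_boot all_order all_algebra.
Set Implicit Arguments. Unset Strict Implicit. Unset Printing Implicit Defensive.
Import Order.TTheory GRing.Theory Num.Theory.
Local Open Scope ring_scope.

Definition symm (R : rcfType) (Y : 'M[R]_3) : 'M[R]_3 := 2^-1 *: (Y + Y^T).

Definition sqnorm (R : rcfType) (Y : 'M[R]_3) : R := \tr (Y^T *m Y).

Definition SO3 (R : rcfType) (Q : 'M[R]_3) : Prop :=
  Q^T *m Q = 1%:M /\ \det Q = 1.

Definition W10 (R : rcfType) (D Q : 'M[R]_3) : R :=
  sqnorm (symm (Q^T *m D - 1%:M)).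

Definition mx3 (R : rcfType) (a b c d e f g h k : R) : 'M[R]_3 :=
  \matrix_(i < 3, j < 3)
    nth 0 (nth [::] [:: [:: a; b; c]; [:: d; e; f]; [:: g; h; k]] i) j.

Definition diag3 (R : rcfType) (a b c : R) : 'M[R]_3 := mx3 a 0 0 0 b 0 0 0 c.

Definition is_global_min_SO3 (R : rcfType) (f : 'M[R]_3 -> R) (Q : 'M[R]_3) :=
  SO3 Q /\ forall P, SO3 P -> f Q <= f P.
Definition is_global_max_SO3 (R : rcfType) (f : 'M[R]_3 -> R) (Q : 'M[R]_3) :=
  SO3 Q /\ forall P, SO3 P -> f P <= f Q.

(* Main.v *)
Require Import Defs.
From HB Require Import structures.
From mathcomp Require Import all_boot all_order all_algebra.
From mathcomp Require Import ring lra.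
Set Implicit Arguments. Unset Strict Implicit. Unset Printing Implicit Defensive.
Import Order.TTheory GRing.Theory Num.Theory.
Local Open Scope ring_scope.

Definition i0 : 'I_3 := @Ordinal 3 0 isT.
Definition i1 : 'I_3 := @Ordinal 3 1 isT.
Definition i2 : 'I_3 := @Ordinal 3 2 isT.
Definition j0 : 'I_2 := @Ordinal 2 0 isT.
Definition j1 : 'I_2 := @Ordinal 2 1 isT.

Lemma sum3 (R : rcfType) (F : 'I_3 -> R) : \sum_(i < 3) F i = F i0 + F i1 + F i2.
Proof.
rewrite !big_ord_recl big_ord0 addr0 addrA.
by congr (F _ + F _ + F _); apply: val_inj.
Qed.

Lemma ord3P (P : 'I_3 -> Prop) : P i0 -> P i1 -> P i2 -> forall i, P i.
Proof.
move=> H0 H1 H2 [[|[|[|m]]] Hm] //.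
- by have -> : Ordinal Hm = i0 by apply: val_inj.
- by have -> : Ordinal Hm = i1 by apply: val_inj.
- by have -> : Ordinal Hm = i2 by apply: val_inj.
Qed.

Lemma det2 (R : rcfType) (B : 'M[R]_2) : \det B = B j0 j0 * B j1 j1 - B j0 j1 * B j1 j0.
Proof.
rewrite (expand_det_row B j0) !big_ord_recl big_ord0 addr0 /cofactor !det_mx11 !mxE /=.
have -> : (lift ord0 ord0 : 'I_2) = j1 by apply: val_inj.
have -> : (lift j0 ord0 : 'I_2) = j1 by apply: val_inj.
have -> : (lift j1 ord0 : 'I_2) = j0 by apply: val_inj.
have -> : (ord0 : 'I_2) = j0 by apply: val_inj.
rewrite /bump /= expr0 expr1 ; ring.
Qed.

Lemma det3 (R : rcfType) (A : 'M[R]_3) : \det A =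
  A i0 i0 * (A i1 i1 * A i2 i2 - A i1 i2 * A i2 i1)
  - A i0 i1 * (A i1 i0 * A i2 i2 - A i1 i2 * A i2 i0)
  + A i0 i2 * (A i1 i0 * A i2 i1 - A i1 i1 * A i2 i0).
Proof.
rewrite (expand_det_row A i0) sum3 /cofactor !det2 !mxE /=.
have -> : (lift i0 j0) = i1 by apply: val_inj.
have -> : (lift i0 j1) = i2 by apply: val_inj.
have -> : (lift i1 j0) = i0 by apply: val_inj.
have -> : (lift i1 j1) = i2 by apply: val_inj.
have -> : (lift i2 j0) = i0 by apply: val_inj.
have -> : (lift i2 j1) = i1 by apply: val_inj.
rewrite expr0 expr1 expr2; ring.
Qed.
Lemma mulmxE3 (R : rcfType) (A B : 'M[R]_3) i j :
  (A *m B) i j = A i i0 * B i0 j + A i i1 * B i1 j + A i i2 * B i2 j.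
Proof. by rewrite mxE sum3. Qed.

Lemma W10E (R : rcfType) (l1 l3 : R) (Q : 'M[R]_3) :
  W10 (diag3 l1 l1 l3) Q =
   (l1 * Q i0 i0 - 1)^+2 + (l1 * Q i1 i1 - 1)^+2 + (l3 * Q i2 i2 - 1)^+2
   + ((l1 * Q i1 i0 + l1 * Q i0 i1)^+2 + (l3 * Q i2 i0 + l1 * Q i0 i2)^+2
      + (l3 * Q i2 i1 + l1 * Q i1 i2)^+2) / 2.
Proof.
rewrite /W10 /sqnorm /symm /mxtrace /diag3 sum3 !mulmxE3 !mxE !sum3 !mxE /=.
by field.
Qed.

Definition colc (R : rcfType) (a b c d e f g h k : R) :=
  [/\ a*a+d*d+g*g = 1, b*b+e*e+h*h = 1, c*c+f*f+k*k = 1 &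
      [/\ a*b+d*e+g*h = 0, a*c+d*f+g*k = 0 & b*c+e*f+h*k = 0]].
Definition rowc (R : rcfType) (a b c d e f g h k : R) :=
  [/\ a*a+b*b+c*c = 1, d*d+e*e+f*f = 1, g*g+h*h+k*k = 1 &
      [/\ a*d+b*e+c*f = 0, a*g+b*h+c*k = 0 & d*g+e*h+f*k = 0]].
Definition detc (R : rcfType) (a b c d e f g h k : R) :=
  a*(e*k - f*h) - b*(d*k - f*g) + c*(d*h - e*g) = 1.

Lemma idE (R : rcfType) (M : 'M[R]_3) i j : M = 1%:M -> M i j = (i == j)%:R.
Proof. by move=> ->; rewrite mxE. Qed.

Lemma SO3_fwd (R : rcfType) (Q : 'M[R]_3) : SO3 Q ->
  let a := Q i0 i0 in let b := Q i0 i1 in let c := Q i0 i2 in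
  let d := Q i1 i0 in let e := Q i1 i1 in let f := Q i1 i2 in
  let g := Q i2 i0 in let h := Q i2 i1 in let k := Q i2 i2 in
  [/\ colc a b c d e f g h k, rowc a b c d e f g h k & detc a b c d e f g h k].
Proof.
move=> [H1 H2]; have H3 : Q *m Q^T = 1%:M by apply: mulmx1C.
move=> a b c d e f g h k.
have C := fun i j => idE i j H1; have Rw := fun i j => idE i j H3.
rewrite /= in C Rw.
split; last by move: H2; rewrite det3.
- split; [move: (C i0 i0)|move: (C i1 i1)|move: (C i2 i2)|split; [move: (C i0 i1)|move: (C i0 i2)|move: (C i1 i2)]];
  by rewrite mulmxE3 !mxE.
- split; [move: (Rw i0 i0)|move: (Rw i1 i1)|move: (Rw i2 i2)|split; [move: (Rw i0 i1)|move: (Rw i0 i2)|move: (Rw i1 i2)]];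
  by rewrite mulmxE3 !mxE.
Qed.

Lemma mx3_eta (R : rcfType) (Q : 'M[R]_3) :
  Q = mx3 (Q i0 i0) (Q i0 i1) (Q i0 i2) (Q i1 i0) (Q i1 i1) (Q i1 i2) (Q i2 i0) (Q i2 i1) (Q i2 i2).
Proof.
apply/matrixP => i j; rewrite mxE.
by move: i j; apply: ord3P; apply: ord3P.
Qed.

Lemma SO3_bwd (R : rcfType) (a b c d e f g h k : R) :
  colc a b c d e f g h k -> detc a b c d e f g h k -> SO3 (mx3 a b c d e f g h k).
Proof.
move=> [N1 N2 N3 [O1 O2 O3]] D; split; last by rewrite det3 !mxE.
apply/matrixP => i j; rewrite mulmxE3 !mxE.
move: i j; apply: ord3P; apply: ord3P => /=; lra.
Qed.
Definition fG (R : rcfType) (l1 l3 s k : R) :=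
  (l1 * s - 2 - (1 - k) * l3)^+2 / 2 + (1 - k) * (l1^+2 - l3^+2) + (l3 - 1)^+2.

Lemma scal (R : rcfType) (l1 l3 a b c d e f g h k : R) :
  colc a b c d e f g h k -> rowc a b c d e f g h k -> detc a b c d e f g h k ->
  [/\ (l1 * a - 1)^+2 + (l1 * e - 1)^+2 + (l3 * k - 1)^+2
   + ((l1 * d + l1 * b)^+2 + (l3 * g + l1 * c)^+2 + (l3 * h + l1 * f)^+2) / 2
      = fG l1 l3 (a + e) k,
      -1 <= k <= 1, -1 <= a <= 1, -1 <= e <= 1 &
      - (1 + k) <= a + e <= 1 + k].
Proof.
move=> [N1 N2 N3 [O1 O2 O3]] [R1 R2 R3 [P1 P2 P3]] D; rewrite /detc in D.
have cof00 : (e*k - f*h) - a = (a*(e*k - f*h) - b*(d*k - f*g) + c*(d*h - e*g) - 1)*a - ((e*k - f*h)*(a*a+d*d+g*g - 1) + (-(d*k - f*g))*(a*b+d*e+g*h) + (d*h - e*g)*(a*c+d*f+g*k)) by ring.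
have cof11 : (a*k - c*g) - e = (a*(e*k - f*h) - b*(d*k - f*g) + c*(d*h - e*g) - 1)*e - ((-(b*k - c*h))*(a*b+d*e+g*h) + (a*k - c*g)*(b*b+e*e+h*h - 1) + (-(a*h - b*g))*(b*c+e*f+h*k)) by ring.
have cof22 : (a*e - b*d) - k = (a*(e*k - f*h) - b*(d*k - f*g) + c*(d*h - e*g) - 1)*k - ((b*f - c*e)*(a*c+d*f+g*k) + (-(a*f - c*d))*(b*c+e*f+h*k) + (a*e - b*d)*(c*c+f*f+k*k - 1)) by ring.
rewrite D N1 N2 N3 O1 O2 O3 in cof00 cof11 cof22.
have Ca : a = e*k - f*h by lra.
have Ce : e = a*k - c*g by lra.
have Ck : k = a*e - b*d by lra.
have hk : -1 <= k <= 1 by apply/andP; split; nra.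
have ha : -1 <= a <= 1 by apply/andP; split; nra.
have he : -1 <= e <= 1 by apply/andP; split; nra.
have T01 : (1 + a + e + k) * (1 + a - e - k) = (h - f)^+2.
  have -> : (1 + a + e + k) * (1 + a - e - k) = (h - f)^+2 + 2 * (a - (e*k - f*h)) + (a*a+b*b+c*c - 1) - (b*b+e*e+h*h - 1) - (c*c+f*f+k*k - 1) by ring.
  by rewrite -Ca R1 N2 N3; ring.
have T03 : (1 + a + e + k) * (1 + k - a - e) = (d - b)^+2.
  have -> : (1 + a + e + k) * (1 + k - a - e) = (d - b)^+2 + 2 * (k - (a*e - b*d)) - (a*a+d*d+g*g - 1) - (b*b+e*e+h*h - 1) + (g*g+h*h+k*k - 1) by ring.
  by rewrite -Ck N1 N2 R3; ring.
have T0 : 0 <= 1 + a + e + k.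
  have := sqr_ge0 (h - f); rewrite -T01 => H.
  nra.
have T3 : 0 <= 1 + k - a - e.
  have := sqr_ge0 (d - b); rewrite -T03 => H.
  nra.
split => //; last by apply/andP; split; lra.
rewrite /fG.
have -> : (l1 * a - 1)^+2 + (l1 * e - 1)^+2 + (l3 * k - 1)^+2
   + ((l1 * d + l1 * b)^+2 + (l3 * g + l1 * c)^+2 + (l3 * h + l1 * f)^+2) / 2
   = (l1 * (a + e) - 2 - (1 - k) * l3)^+2 / 2 + (1 - k) * (l1^+2 - l3^+2) + (l3 - 1)^+2
   + l1^+2/2 * (a*a+b*b+c*c - 1) + l1^+2/2 * (d*d+e*e+f*f - 1) + l3^+2/2*(g*g+h*h+k*k - 1)
   + l1^+2 * (k - (a*e - b*d)) + l1 * l3 * ((e - (a*k - c*g)) + (a - (e*k - f*h))).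
  by field.
by rewrite -Ca -Ce -Ck R1 R2 R3 !subrr; ring.
Qed.
Lemma fmax (R : rcfType) (l1 l3 s k : R) : 0 < l3 -> l3 < l1 ->
  -1 <= k <= 1 -> - (1 + k) <= s <= 1 + k ->
  fG l1 l3 s k <= 2 * (l1 + 1)^+2 + (l3 - 1)^+2 /\
  (2 * (l1 + 1)^+2 + (l3 - 1)^+2 <= fG l1 l3 s k -> k = 1 /\ s = -2).
Proof.
move=> h3 h13 /andP[k1 k2] /andP[s1 s2].
have Hid : 2 * (l1 + 1)^+2 + (l3 - 1)^+2 - fG l1 l3 s k =
  2 * (l1 * (1 + k + s)) + 2 * ((l1 - l3) * (1 - k))
  + 8 * (l1^+2 * (((1 + k - s) / 4) * ((1 + k + s) / 4)))
  + 2 * ((l1 - l3)^+2 * (((1 + k - s) / 4) * ((1 - k) / 2)))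
  + 2 * ((l1 + l3)^+2 * (((1 + k + s) / 4) * ((1 - k) / 2))).
  by rewrite /fG; field.
have t1 : 0 <= l1 * (1 + k + s) by apply: mulr_ge0; lra.
have t2 : 0 <= (l1 - l3) * (1 - k) by apply: mulr_ge0; lra.
have t3 : 0 <= l1^+2 * (((1 + k - s) / 4) * ((1 + k + s) / 4)).
  by apply: mulr_ge0; [exact: sqr_ge0| apply: mulr_ge0; lra].
have t4 : 0 <= (l1 - l3)^+2 * (((1 + k - s) / 4) * ((1 - k) / 2)).
  by apply: mulr_ge0; [exact: sqr_ge0| apply: mulr_ge0; lra].
have t5 : 0 <= (l1 + l3)^+2 * (((1 + k + s) / 4) * ((1 - k) / 2)).
  by apply: mulr_ge0; [exact: sqr_ge0| apply: mulr_ge0; lra].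
split; first lra.
move=> H.
have u1 : l1 * (1 + k + s) <= 0 by lra.
have u2 : (l1 - l3) * (1 - k) <= 0 by lra.
have v1 : 1 + k + s <= 0 by nra.
have v2 : 1 - k <= 0 by nra.
split; lra.
Qed.

Lemma fmin1 (R : rcfType) (l1 l3 s k : R) : 0 < l3 -> l3 < l1 -> k <= 1 ->
  (l3 - 1)^+2 <= fG l1 l3 s k /\
  (fG l1 l3 s k <= (l3 - 1)^+2 -> k = 1 /\ l1 * s = 2).
Proof.
move=> h3 h13 k1.
have hl : 0 < l1^+2 - l3^+2 by nra.
have t1 : 0 <= (1 - k) * (l1^+2 - l3^+2) by apply: mulr_ge0; lra.
have t2 := sqr_ge0 (l1 * s - 2 - (1 - k) * l3).
rewrite /fG; split; first lra.
move=> H.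
have u1 : (1 - k) * (l1^+2 - l3^+2) <= 0 by lra.
have v1 : 1 - k <= 0 by nra.
have ek : k = 1 by lra.
have u2 : (l1 * s - 2 - (1 - k) * l3)^+2 <= 0 by lra.
have : (l1 * s - 2 - (1 - k) * l3)^+2 == 0 by rewrite eq_le u2 sqr_ge0.
rewrite sqrf_eq0 ek subrr mul0r subr0 subr_eq0 => /eqP ->.
by [].
Qed.

Lemma fmin2 (R : rcfType) (l1 l3 s k : R) : 0 < l3 -> l3 < l1 -> l1 <= 1 -> k <= 1 ->
  s <= 1 + k ->
  2 * (l1 - 1)^+2 + (l3 - 1)^+2 <= fG l1 l3 s k /\
  (fG l1 l3 s k <= 2 * (l1 - 1)^+2 + (l3 - 1)^+2 -> k = 1 /\ s = 2).
Proof.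
move=> h3 h13 h1 k1 s1.
have hl : 0 < l1^+2 - l3^+2 by nra.
have t1 : 0 <= (1 - k) * (l1^+2 - l3^+2) by apply: mulr_ge0; lra.
set X := l1 * s - 2 - (1 - k) * l3.
have hX : X <= 2 * (l1 - 1) - (l1 + l3) * (1 - k) by rewrite /X; nra.
have hY : 0 <= (l1 + l3) * (1 - k) by apply: mulr_ge0; lra.
have t2 : (2 * (l1 - 1))^+2 <= X^+2 by nra.
rewrite /fG -/X; split; first lra.
move=> H.
have u1 : (1 - k) * (l1^+2 - l3^+2) <= 0 by lra.
have v1 : 1 - k <= 0 by nra.
have ek : k = 1 by lra.
have u2 : X^+2 <= (2 * (l1 - 1))^+2 by lra.
have hX2 : X <= 2 * (l1 - 1) by lra.
have eX : X = 2 * (l1 - 1) by nra.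
move: eX; rewrite /X ek subrr mul0r subr0 => eX.
split => //; nra.
Qed.
Lemma Wfacts (R : rcfType) (l1 l3 : R) (Q : 'M[R]_3) : SO3 Q ->
  [/\ W10 (diag3 l1 l1 l3) Q = fG l1 l3 (Q i0 i0 + Q i1 i1) (Q i2 i2),
      -1 <= Q i2 i2 <= 1, -1 <= Q i0 i0 <= 1, -1 <= Q i1 i1 <= 1 &
      - (1 + Q i2 i2) <= Q i0 i0 + Q i1 i1 <= 1 + Q i2 i2].
Proof.
move=> /SO3_fwd [H1 H2 H3].
have [E ? ? ? ?] := scal l1 l3 H1 H2 H3.
by split => //; rewrite W10E.
Qed.

Lemma sq0 (R : rcfType) (x y : R) : x * x + y * y = 0 -> x = 0.
Proof.
move=> H; apply/eqP; rewrite -sqrf_eq0 eq_le sqr_ge0 andbT.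
have := sqr_ge0 y; have := sqr_ge0 x; rewrite !expr2 => *; lra.
Qed.

Lemma Qfix (R : rcfType) (Q : 'M[R]_3) : SO3 Q -> Q i2 i2 = 1 ->
  [/\ Q i0 i2 = 0, Q i1 i2 = 0, Q i2 i0 = 0, Q i2 i1 = 0 &
   [/\ Q i1 i1 = Q i0 i0, Q i1 i0 = - Q i0 i1 & Q i0 i0 ^+ 2 + Q i0 i1 ^+ 2 = 1]].
Proof.
move=> /SO3_fwd [[N1 N2 N3 [O1 O2 O3]] [R1 R2 R3 [P1 P2 P3]] Dt] k1.
move: N1 N2 N3 O1 O2 O3 R1 R2 R3 P1 P2 P3 Dt; rewrite /detc k1.
set a := Q i0 i0; set b := Q i0 i1; set c := Q i0 i2; set d := Q i1 i0.
set e := Q i1 i1; set f := Q i1 i2; set g := Q i2 i0; set h := Q i2 i1.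
move=> N1 N2 N3 O1 O2 O3 R1 R2 R3 P1 P2 P3 Dt.
have c0 : c = 0 by apply: (@sq0 _ c f); lra.
have f0 : f = 0 by apply: (@sq0 _ f c); lra.
have g0 : g = 0 by apply: (@sq0 _ g h); lra.
have h0 : h = 0 by apply: (@sq0 _ h g); lra.
rewrite c0 f0 g0 h0 in N1 N2 Dt.
have ae : (a - e)^+2 + (b + d)^+2 = 0.
  have -> : (a - e)^+2 + (b + d)^+2 = (a*a + d*d + 0*0 - 1) + (b*b+e*e+0*0 - 1)
     - 2 * (a * (e * 1 - 0 * 0) - b * (d * 1 - 0 * 0) + 0 * (d * 0 - e * 0) - 1) by ring.
  by rewrite N1 N2 Dt; ring.
have z1 : a - e = 0 by apply: (@sq0 _ _ (b + d)); rewrite -!expr2.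
have z2 : b + d = 0 by apply: (@sq0 _ _ (a - e)); rewrite -!expr2 addrC.
have ea : e = a by lra.
have db : d = - b by lra.
split => //; split => //.
by rewrite -N1 db; ring.
Qed.

Lemma mx3_entries (R : rcfType) (a b c d e f g h k : R) :
  let M := mx3 a b c d e f g h k in
  [/\ M i0 i0 = a, M i0 i1 = b, M i0 i2 = c, M i1 i0 = d &
  [/\ M i1 i1 = e, M i1 i2 = f, M i2 i0 = g, M i2 i1 = h & M i2 i2 = k]].
Proof. by rewrite /= !mxE. Qed.

Lemma mx3_of (R : rcfType) (Q : 'M[R]_3) a b c d e f g h k :
  Q i0 i0 = a -> Q i0 i1 = b -> Q i0 i2 = c -> Q i1 i0 = d -> Q i1 i1 = e ->
  Q i1 i2 = f -> Q i2 i0 = g -> Q i2 i1 = h -> Q i2 i2 = k ->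
  Q = mx3 a b c d e f g h k.
Proof. by move=> *; rewrite {1}(mx3_eta Q); congr mx3. Qed.
Lemma id_mx3 (R : rcfType) : (1%:M : 'M[R]_3) = mx3 1 0 0 0 1 0 0 0 1.
Proof. by apply: mx3_of; rewrite mxE. Qed.

Unset Implicit Arguments.
Set Strict Implicit.
Theorem mainTheorem10 (R : rcfType) (l1 l3 : R) (h3 : 0 < l3) (h13 : l3 < l1) :
  let D := diag3 l1 l1 l3 in
  let s := Num.sqrt (1 - 1 / l1 ^+ 2) in
  (forall Q, is_global_max_SO3 (W10 D) Q <-> Q = diag3 (-1) (-1) 1) /\
  (1 < l1 ->
     forall Q, is_global_min_SO3 (W10 D) Q <->
       (Q = mx3 (1 / l1) (- s) 0  s (1 / l1) 0  0 0 1 \/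
        Q = mx3 (1 / l1) s 0  (- s) (1 / l1) 0  0 0 1)) /\
  (l1 <= 1 -> forall Q, is_global_min_SO3 (W10 D) Q <-> Q = 1%:M).
Proof.
move=> D s; rewrite /D.
have l1p : 0 < l1 by lra.
have l1n0 : l1 != 0 by rewrite gt_eqF.
have HQ0 : SO3 (diag3 (-1 : R) (-1) 1).
  by rewrite /diag3; apply: SO3_bwd; rewrite /colc /detc; repeat split; ring.
have WQ0 : W10 (diag3 l1 l1 l3) (diag3 (-1) (-1) 1) = 2 * (l1 + 1)^+2 + (l3 - 1)^+2.
  have [-> _ _ _ _] := Wfacts l1 l3 HQ0.
  by rewrite /diag3 !mxE /= /fG; field.
split.
  move=> Q; split.
    move=> [HQ Hmax]; have := Hmax _ HQ0; rewrite WQ0.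
    have [WQ hk ha he hs] := Wfacts l1 l3 HQ; rewrite WQ => Hge.
    have [_ /(_ Hge) [k1 s2]] := fmax h3 h13 hk hs.
    have [c0 f0 g0 h0 [ea db n]] := Qfix HQ k1.
    have a1 : Q i0 i0 = -1 by lra.
    have b0 : Q i0 i1 = 0.
      by apply: (@sq0 _ _ 0); move: n; rewrite a1 !expr2; lra.
    rewrite /diag3; apply: mx3_of => //; lra.
  move=> ->; split => // P HP.
  have [WP hk ha he hs] := Wfacts l1 l3 HP.
  by rewrite WQ0 WP; exact: (fmax h3 h13 hk hs).1.
split.
  move=> hl1 Q.
  set il := 1 / l1.
  have hil : il * il < 1.
    rewrite /il mulf_div mulr1 ltr_pdivrMr ?mulr_gt0 // mul1r; nra.
  have hs2 : s * s = 1 - il * il.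
    rewrite -expr2 /s sqr_sqrtr; last first.
      by move: hil; rewrite /il mulf_div mulr1 -expr2; lra.
    by rewrite /il mulf_div mulr1 expr2.
  have HQp : SO3 (mx3 il (- s) 0 s il 0 0 0 1).
    by apply: SO3_bwd; rewrite /colc /detc; repeat split; lra.
  have HQm : SO3 (mx3 il s 0 (- s) il 0 0 0 1).
    by apply: SO3_bwd; rewrite /colc /detc; repeat split; lra.
  have Wv : fG l1 l3 (il + il) 1 = (l3 - 1)^+2 by rewrite /fG /il; field.
  have WQp : W10 (diag3 l1 l1 l3) (mx3 il (- s) 0 s il 0 0 0 1) = (l3 - 1)^+2.
    have [-> _ _ _ _] := Wfacts l1 l3 HQp.
    by rewrite !mxE /=.
  have WQm : W10 (diag3 l1 l1 l3) (mx3 il s 0 (- s) il 0 0 0 1) = (l3 - 1)^+2.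
    have [-> _ _ _ _] := Wfacts l1 l3 HQm.
    by rewrite !mxE /=.
  have minP : forall P, SO3 P -> (l3 - 1)^+2 <= W10 (diag3 l1 l1 l3) P.
    move=> P HP; have [WP hk ha he hs] := Wfacts l1 l3 HP.
    by rewrite WP; case: (@fmin1 R l1 l3 (P i0 i0 + P i1 i1) (P i2 i2) h3 h13 (proj2 (andP hk))).
  split.
    move=> [HQ Hmin]; have := Hmin _ HQp; rewrite WQp.
    have [WQ hk ha he hs] := Wfacts l1 l3 HQ; rewrite WQ => Hle.
    have [_ /(_ Hle) [k1 s2]] := @fmin1 R l1 l3 (Q i0 i0 + Q i1 i1) (Q i2 i2) h3 h13 (proj2 (andP hk)).
    have [c0 f0 g0 h0 [ea db n]] := Qfix HQ k1.
    have H1 : l1 * Q i0 i0 = 1 by move: s2; rewrite ea mulrDr; lra.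
    have a1 : Q i0 i0 = il by rewrite /il -[Q i0 i0](mulKf l1n0) H1 mulrC.
    have : (Q i0 i1 - s) * (Q i0 i1 + s) = 0.
      by move: n; rewrite a1 !expr2 => n; lra.
    move/eqP; rewrite mulf_eq0 => /orP [/eqP bs | /eqP bs].
      right; apply: mx3_of => //; lra.
    left; apply: mx3_of => //; lra.
  by case=> ->; split => // P HP; rewrite ?WQp ?WQm; apply: minP.
move=> hl1 Q.
have HI : SO3 (1%:M : 'M[R]_3).
  by rewrite id_mx3; apply: SO3_bwd; rewrite /colc /detc; repeat split; ring.
have WI : W10 (diag3 l1 l1 l3) 1%:M = 2 * (l1 - 1)^+2 + (l3 - 1)^+2.
  have [-> _ _ _ _] := Wfacts l1 l3 HI.
  by rewrite !mxE /= /fG; field.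
split.
  move=> [HQ Hmin]; have := Hmin _ HI; rewrite WI.
  have [WQ hk ha he hs] := Wfacts l1 l3 HQ; rewrite WQ => Hle.
  have [_ /(_ Hle) [k1 s2]] := fmin2 h3 h13 hl1 (proj2 (andP hk)) (proj2 (andP hs)).
  have [c0 f0 g0 h0 [ea db n]] := Qfix HQ k1.
  have a1 : Q i0 i0 = 1 by lra.
  have b0 : Q i0 i1 = 0.
    by apply: (@sq0 _ _ 0); move: n; rewrite a1 !expr2; lra.
  rewrite id_mx3; apply: mx3_of => //; lra.
move=> ->; split => // P HP.
have [WP hk ha he hs] := Wfacts l1 l3 HP.
by rewrite WI WP; case: (fmin2 h3 h13 hl1 (proj2 (andP hk)) (proj2 (andP hs))).
Qed.
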